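(* Let $p>2$ be a prime and let $a,b\in\mathbb{C}_p$ with $a\neq0$, $b\neq0$, $a\neq b$ and $|2a|_p>|b|_p$. Let $P=-\frac1b$, $D=\mathbb{C}_p\setminus\{P\}$, $f(x)=\frac{ax^2}{bx+1}$ on $D$, $x_1=0$, $x_2=\frac1{a-b}$, and $r_1=\frac{1}{|a|_p}$. Then $x_1$ is an attracting fixed point and $x_2$ is an indifferent fixed point of $f$, and $$A(x_1)=B_{r_1}(x_1),\qquad SI(x_2)=B_{r_1}(x_2).$$
   Context: $\mathbb{C}_p$ is the field of complex $p$-adic numbers with $p$-adic norm $|\cdot|_p$. For $c\in\mathbb{C}_p$, $r>0$: $B_r(c)=\{x:|x-c|_p<r\}$, $S_r(c)=\{x:|x-c|_p=r\}$. For $y\in D$, $y^{(n)}=f^n(y)$ is the $n$-th iterate (defined as long as no earlier iterate equals $P$). A fixed point $x^{(0)}$ of $f$ is attracting if $|f'(x^{(0)})|_p<1$ and indifferent if $|f'(x^{(0)})|_p=1$. Its basin of attraction is $A(x^{(0)})=\{y: y^{(n)}\text{ defined for all }n,\ y^{(n)}\to x^{(0)}\}$. A ball $B_r(x^{(0)})$ contained in $D$ is a Siegel disk of $x^{(0)}$ if every sphere $S_\rho(x^{(0)})$ with $\rho<r$ is invariant, i.e. $x\in S_\rho(x^{(0)})$ implies $x^{(n)}\in S_\rho(x^{(0)})$ for all $n\ge1$; the maximal Siegel disk $SI(x^{(0)})$ is the union of all Siegel disks centered at $x^{(0)}$. *)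

(* Defs.v *)
(* C_p is not available in the libraries; we model it as an
   abstract algebraically closed field K with a complete, non-archimedean
   absolute value extending the p-adic absolute value (|p| = 1/p). *)
From HB Require Import structures.
From mathcomp Require Import all_boot all_order all_algebra.
From mathcomp Require Import reals.
Set Implicit Arguments. Unset Strict Implicit. Unset Printing Implicit Defensive.
Import Order.TTheory GRing.Theory Num.Theory.
Local Open Scope ring_scope.

Section Defs.
Variables (R : realType) (K : fieldType) (abs : K -> R).

Definition abs_cvg (u : nat -> K) (l : K) : Prop :=
  forall eps : R, 0 < eps -> exists N : nat, forall n, (N <= n)%N -> abs (u n - l) < eps.

Definition abs_cauchy (u : nat -> K) : Prop :=
  forall eps : R, 0 < eps -> exists N : nat, forall m n, (N <= m)%N -> (N <= n)%N ->
    abs (u m - u n) < eps.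

Record padic_abs (p : nat) : Prop := {
  abs_ge0 : forall x, 0 <= abs x;
  abs_eq0 : forall x, abs x = 0 <-> x = 0;
  absM : forall x y, abs (x * y) = abs x * abs y;
  abs_ultra : forall x y, abs (x + y) <= Num.max (abs x) (abs y);
  abs_p : abs (p%:R) = (p%:R)^-1;
  abs_complete : forall u, abs_cauchy u -> exists l, abs_cvg u l
}.

Definition abs_derive (f : K -> K) (x d : K) : Prop :=
  forall eps : R, 0 < eps -> exists delta : R, 0 < delta /\
    forall h, 0 < abs h -> abs h < delta -> abs ((f (x + h) - f x) / h - d) < eps.

Variables (P : K) (f : K -> K).

Definition step (y : option K) : option K :=
  match y with
  | Some x => if x == P then None else Some (f x)
  | None => None
  end.

(* iterate n y = Some (y^(n)) when defined, None otherwise *)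
Definition iterate (n : nat) (y : K) : option K := iter n step (Some y).

Definition is_fixed (x : K) : Prop := x <> P /\ f x = x.

Definition attracting (x : K) : Prop :=
  is_fixed x /\ exists d, abs_derive f x d /\ abs d < 1.

Definition indifferent (x : K) : Prop :=
  is_fixed x /\ exists d, abs_derive f x d /\ abs d = 1.

Definition basin (x0 : K) : K -> Prop := fun y =>
  exists u : nat -> K, (forall n, iterate n y = Some (u n)) /\ abs_cvg u x0.

Definition siegel_disk (x0 : K) (r : R) : Prop :=
  0 < r /\ (forall x, abs (x - x0) < r -> x <> P) /\
  forall rho : R, rho < r -> forall x, abs (x - x0) = rho ->
    forall n, (1 <= n)%N -> exists y, iterate n x = Some y /\ abs (y - x0) = rho.

Definition max_siegel (x0 : K) : K -> Prop := fun y =>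
  exists r : R, siegel_disk x0 r /\ abs (y - x0) < r.

End Defs.

(* Main.v *)
Require Import Defs.
From HB Require Import structures.
From mathcomp Require Import all_boot all_order all_algebra.
From mathcomp Require Import reals.
From mathcomp Require Import ring lra.
Import Order.TTheory GRing.Theory Num.Theory.
Set Implicit Arguments. Unset Strict Implicit.
Local Open Scope ring_scope.

Lemma bern (R : realType) (t : R) (n : nat) : 0 <= t -> 1 + n%:R * t <= (1 + t) ^+ n.
Proof.
move=> t0; elim: n => [|n IH]; first by rewrite expr0 mul0r addr0.
rewrite exprS -natr1.
have h1 : 0 <= n%:R * t by rewrite mulr_ge0 // ler0n.
have h2 : 0 <= n%:R * t * t by rewrite mulr_ge0.
have := ler_wpM2l (_ : 0 <= 1 + t) IH.
nra.
Qed.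

Lemma geo_small (R : realType) (q eps : R) : 0 <= q -> q < 1 -> 0 < eps ->
  exists N : nat, q ^+ N < eps.
Proof.
move=> q0 q1 e0.
have [->|qn0] := eqVneq q 0; first by exists 1%N; rewrite expr1.
have qp : 0 < q by rewrite lt_def qn0.
set t := q^-1 - 1.
have tp : 0 < t by rewrite /t subr_gt0 invf_gt1.
set N := Num.Def.archi_bound ((t * eps)^-1).
have hN : (t * eps)^-1 < N%:R by apply: archi_boundP; rewrite invr_ge0 mulr_ge0 // ltW.
exists N.
have hb := @bern _ t N (ltW tp).
have e1 : q * (1 + t) = 1 by rewrite /t addrC subrK mulfV.
have e2 : q ^+ N * (1 + t) ^+ N = 1 by rewrite -exprMn e1 expr1n.
have h3 : 1 < N%:R * t * eps.
  by move: hN; rewrite -[(t*eps)^-1]mul1r ltr_pdivrMr ?mulr_gt0 // mulrA.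
have qN0 : 0 <= q ^+ N by rewrite exprn_ge0 // ltW.
have h4 : q ^+ N * (1 + N%:R * t) <= 1 by rewrite -[X in _ <= X]e2 ler_wpM2l.
have h5 : 0 <= N%:R * t by rewrite mulr_ge0 ?ler0n // ltW.
nra.
Qed.

Lemma abs0' (R : realType) (K : fieldType) (abs : K -> R) p (h : padic_abs abs p) :
  abs 0 = 0.
Proof. by apply/(abs_eq0 h). Qed.

Lemma abs1' (R : realType) (K : fieldType) (abs : K -> R) p (h : padic_abs abs p) :
  abs 1 = 1.
Proof.
have e := absM h 1 1; rewrite mulr1 in e.
have n0 : abs 1 != 0 by apply/eqP => /(abs_eq0 h) /eqP; rewrite oner_eq0.
by apply: (mulfI n0); rewrite -e mulr1.
Qed.

Lemma absN' (R : realType) (K : fieldType) (abs : K -> R) p (h : padic_abs abs p) x :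
  abs (- x) = abs x.
Proof.
have e := absM h (-1) (-1); rewrite mulrNN mulr1 (abs1' h) in e.
have g := abs_ge0 h (-1).
have e1 : abs (-1) = 1.
  have : (abs (-1) - 1) * (abs (-1) + 1) = 0 by rewrite mulrBl !mulrDr -e; ring.
  move/eqP; rewrite mulf_eq0 => /orP[]; first by rewrite subr_eq0 => /eqP.
  move=> /eqP h2; exfalso; lra.
by rewrite -mulN1r (absM h) e1 mul1r.
Qed.

Lemma absV' (R : realType) (K : fieldType) (abs : K -> R) p (h : padic_abs abs p) x :
  abs (x^-1) = (abs x)^-1.
Proof.
have [->|x0] := eqVneq x 0; first by rewrite invr0 (abs0' h) invr0.
have e := absM h x x^-1; rewrite mulfV // (abs1' h) in e.
have n0 : abs x != 0 by apply/eqP => /(abs_eq0 h) /eqP; rewrite (negbTE x0).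
by apply: (mulfI n0); rewrite -e mulfV.
Qed.

Lemma absD' (R : realType) (K : fieldType) (abs : K -> R) p (h : padic_abs abs p) x y :
  abs x < abs y -> abs (x + y) = abs y.
Proof.
move=> lt.
have u1 := abs_ultra h x y.
have u2 := abs_ultra h (x + y) (- x).
rewrite addrAC subrr add0r (absN' h) in u2.
apply/eqP; rewrite eq_le; apply/andP; split.
  by apply: le_trans u1 _; rewrite ge_max lexx ltW.
move: u2; rewrite le_max => /orP[] //.
by move=> /(lt_le_trans lt); rewrite ltxx.
Qed.

Lemma absnat' (R : realType) (K : fieldType) (abs : K -> R) p (h : padic_abs abs p) n :
  abs n%:R <= 1.
Proof.
elim: n => [|n IH]; first by rewrite (abs0' h) ler01.
rewrite -natr1; apply: le_trans (abs_ultra h _ _) _.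
by rewrite ge_max IH (abs1' h) lexx.
Qed.

Lemma abs2' (R : realType) (K : fieldType) (abs : K -> R) p (h : padic_abs abs p) :
  prime p -> (2 < p)%N -> abs 2 = 1.
Proof.
move=> pp p2.
have podd : odd p by case/even_prime: pp => // e; rewrite e in p2.
have e : (p.+1 = 2 * (p.+1)./2)%N.
  by rewrite -[in LHS](odd_double_half p.+1) /= podd /= -muln2 mulnC.
have h1 : abs (p.+1)%:R <= abs 2.
  rewrite e natrM (absM h). rewrite -[X in _ <= X]mulr1. rewrite ler_wpM2l ?(abs_ge0 h) //.
  exact: (absnat' h _).
have h2 : abs 1 <= Num.max (abs (p.+1)%:R) (abs (- p%:R)).
  by have := abs_ultra h ((p.+1)%:R) (- p%:R); rewrite -natr1 addrAC subrr add0r.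
rewrite (abs1' h) (absN' h) (abs_p h) in h2.
have h3 : (p%:R : R)^-1 < 1 by rewrite invf_lt1 ?ltr0n ?ltr1n ?(prime_gt0 pp) // prime_gt1.
have h4 := absnat' h 2.
apply/eqP; rewrite eq_le h4 /=.
move: h2; rewrite le_max => /orP[] h5; first exact: le_trans h5 h1.
by exfalso; move: (lt_le_trans h3 h5); rewrite ltxx.
Qed.
Lemma absnz' (R : realType) (K : fieldType) (abs : K -> R) p (h : padic_abs abs p) x :
  x != 0 -> 0 < abs x.
Proof.
move=> x0; rewrite lt_def (abs_ge0 h) andbT.
by apply/eqP => /(abs_eq0 h) /eqP; rewrite (negbTE x0).
Qed.

Lemma iter_inv (K : fieldType) (P : K) (f : K -> K) (Q : K -> Prop) y :
  Q y -> (forall x, Q x -> x != P /\ Q (f x)) ->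
  forall n, iterate P f n y = Some (iter n f y) /\ Q (iter n f y).
Proof.
move=> Qy hQ; elim=> [|n [IH1 IH2]]; first by [].
have [nP Qf] := hQ _ IH2.
split; last by rewrite iterS.
by rewrite /iterate iterS -/(iterate P f n y) IH1 /= (negbTE nP).
Qed.

Lemma iter_seq (K : fieldType) (P : K) (f : K -> K) y (u : nat -> K) :
  (forall n, iterate P f n y = Some (u n)) ->
  u 0%N = y /\ forall n, u n != P /\ u n.+1 = f (u n).
Proof.
move=> hu; split; first by have := hu 0%N; case.
move=> n; have := hu n.+1; rewrite /iterate iterS -/(iterate P f n y) hu /=.
by case: eqP => // _ [<-].
Qed.

Theorem theorem3p6 (R : realType) (K : closedFieldType) (abs : K -> R) (p : nat)
  (hp : prime p) (hp2 : (2 < p)%N) (habs : padic_abs abs p)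
  (a b : K) (ha : a != 0) (hb : b != 0) (hab : a != b)
  (hba : abs b < abs (2 * a)) :
  let P := - b^-1 in
  let f := fun x : K => a * x ^+ 2 / (b * x + 1) in
  let x1 : K := 0 in
  let x2 : K := (a - b)^-1 in
  let r1 : R := (abs a)^-1 in
  attracting abs P f x1 /\ indifferent abs P f x2 /\
  (forall y, basin abs P f x1 y <-> abs (y - x1) < r1) /\
  (forall y, max_siegel abs P f x2 y <-> abs (y - x2) < r1).
Proof.
move=> P f x1 x2 r1.
have a2 := abs2' habs hp hp2.
have aM := absM habs.
have ag := abs_ge0 habs.
have a1 := abs1' habs.
have a0 : 0 < abs a by apply: (absnz' habs).
have hba' : abs b < abs a by rewrite aM a2 mul1r in hba.
have abn : a - b != 0 by rewrite subr_eq0.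
have hab1 : abs (a - b) = abs a by rewrite addrC (absD' habs) // (absN' habs).
have h2ab : abs (2 * a - b) = abs a.
  rewrite addrC (absD' habs) aM a2 ?mul1r //.
  by rewrite (absN' habs).
have r1p : 0 < r1 by rewrite invr_gt0.
have rr : forall z, (abs z < r1) = (abs a * abs z < 1).
  by move=> z; rewrite /r1 -[(abs a)^-1]mul1r ltr_pdivlMr // mulrC.
have PE : forall x, (x == P) = (b * x + 1 == 0).
  move=> x; rewrite /P; apply/eqP/eqP => [->|e]; first by rewrite mulrN mulfV // addrC subrr.
  apply: (mulfI hb); rewrite mulrN mulfV //; apply/eqP; rewrite -addr_eq0 e.
  done.
have L1 : forall x, abs a * abs x < 1 -> abs (b * x + 1) = 1.
  move=> x hx; rewrite (absD' habs) ?a1 // aM; apply: le_lt_trans hx.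
  by rewrite ler_wpM2r // ltW.
have Lsm : forall x, abs a * abs x < 1 -> abs a * abs (f x) = (abs a * abs x) ^+ 2.
  move=> x hx; rewrite /f !aM (absV' habs) L1 // invr1 mulr1; ring.
have L2 : forall x, x != P -> 1 <= abs a * abs x -> abs a * abs x <= abs a * abs (f x).
  move=> x xP hx.
  have nz : b * x + 1 != 0 by rewrite -PE.
  have d0 := absnz' habs nz.
  have d1 : abs (b * x + 1) <= abs a * abs x.
    apply: le_trans (abs_ultra habs _ _) _; rewrite ge_max a1 hx aM andbT.
    by rewrite ler_wpM2r // ltW.
  rewrite /f !aM (absV' habs).
  move: (abs (b * x + 1)) d0 d1 => d d0 d1.
  have -> : abs a * (abs a * (abs x * abs x) * d^-1) = (abs a * abs x) * (abs a * abs x) / d.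
    by rewrite /=; ring.
  by rewrite ler_pdivlMr // ler_wpM2l // mulr_ge0.
have e1 : a * x2 + 1 = (2 * a - b) / (a - b) by rewrite /x2; field.
have e2 : b * x2 + 1 = a / (a - b) by rewrite /x2; field.
have ae1 : abs (a * x2 + 1) = 1 by rewrite e1 aM (absV' habs) h2ab hab1 mulfV // gt_eqF.
have ae2 : abs (b * x2 + 1) = 1 by rewrite e2 aM (absV' habs) hab1 mulfV // gt_eqF.
have L3 : forall x, abs a * abs (x - x2) < 1 ->
    abs (b * x + 1) = 1 /\ abs (f x - x2) = abs (x - x2).
  move=> x hx.
  have eb : b * x + 1 = b * (x - x2) + (b * x2 + 1) by ring.
  have ea : a * x + 1 = a * (x - x2) + (a * x2 + 1) by ring.
  have hb1 : abs (b * x + 1) = 1.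
    rewrite eb (absD' habs) ae2 // aM; apply: le_lt_trans hx.
    by rewrite ler_wpM2r // ltW.
  have ha1 : abs (a * x + 1) = 1 by rewrite ea (absD' habs) ae1 // aM.
  split => //.
  have nz : b * x + 1 != 0 by apply/eqP => e; move: hb1; rewrite e (abs0' habs) => /eqP; rewrite eq_sym oner_eq0.
  have -> : f x - x2 = (x - x2) * (a * x + 1) / (b * x + 1).
    rewrite /f /x2; field => //; rewrite abn andbT.
    by rewrite /x2 in nz.
  by rewrite !aM (absV' habs) ha1 hb1 invr1 !mulr1.
have f0 : f 0 = 0 by rewrite /f expr2 !mul0r mulr0 mul0r.
have fx2 : f x2 = x2.
  rewrite /f e2 /x2; field => //; by rewrite abn ha.
have mind : forall eps, 0 < eps -> 0 < Num.min r1 (eps / abs a).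
  by move=> eps e0; rewrite lt_min r1p divr_gt0.
split.
  split.
    split; last exact: f0.
    by move/eqP; rewrite PE /x1 mulr0 add0r oner_eq0.
  exists 0; split; last by rewrite (abs0' habs) ltr01.
  move=> eps e0; exists (Num.min r1 (eps / abs a)); split; first exact: mind.
  move=> h h0; rewrite lt_min => /andP[hd1 hd2].
  have hn : h != 0 by apply/eqP => e; move: h0; rewrite e (abs0' habs) ltxx.
  have hs : abs a * abs h < 1 by rewrite -rr.
  have nz : b * h + 1 != 0.
    by apply/eqP => e; move: (L1 _ hs); rewrite e (abs0' habs) => /eqP; rewrite eq_sym oner_eq0.
  have -> : (f (x1 + h) - f x1) / h - 0 = a * h / (b * h + 1).
    rewrite /x1 add0r f0 subr0 subr0 /f; field; by rewrite nz hn.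
  rewrite !aM (absV' habs) L1 // invr1 mulr1.
  by move: hd2; rewrite ltr_pdivlMr // mulrC.
split.
  split.
    split; last exact: fx2.
    by move/eqP; rewrite PE e2 mulf_eq0 invr_eq0 (negbTE ha) (negbTE abn).
  exists ((2 * a - b) / a); split; last first.
    by rewrite aM (absV' habs) h2ab mulfV // gt_eqF.
  move=> eps e0; exists (Num.min r1 (eps / abs a)); split; first exact: mind.
  move=> h h0; rewrite lt_min => /andP[hd1 hd2].
  have hn : h != 0 by apply/eqP => e; move: h0; rewrite e (abs0' habs) ltxx.
  have hs : abs a * abs (x2 + h - x2) < 1 by rewrite addrAC subrr add0r -rr.
  have [hb1 _] := L3 _ hs.
  have nz : b * (x2 + h) + 1 != 0.
    by apply/eqP => e; move: hb1; rewrite e (abs0' habs) => /eqP; rewrite eq_sym oner_eq0.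
  have nz2 : b * (1 + h * (a - b)) + (a - b) != 0.
    have -> : b * (1 + h * (a - b)) + (a - b) = (a - b) * (b * (x2 + h) + 1).
      by rewrite /x2; field.
    by rewrite mulf_neq0.
  have -> : (f (x2 + h) - f x2) / h - (2 * a - b) / a
      = (a - b) ^+ 2 * h / (a * (b * (x2 + h) + 1)).
    rewrite fx2 /f /x2; field; by rewrite abn nz2 ha hn.
  rewrite !aM (absV' habs) aM hb1 mulr1 hab1.
  have -> : abs a * abs a * abs h * (abs a)^-1 = abs a * abs h.
    by field; rewrite gt_eqF.
  by move: hd2; rewrite ltr_pdivlMr // mulrC.
split.
  move=> y; rewrite /x1 subr0 rr; split.
    case=> u [hu hc].
    have [u0 hs] := iter_seq hu.
    rewrite ltNge; apply/negP => hy.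
    have big : forall n, 1 <= abs a * abs (u n).
      elim=> [|n IH]; first by rewrite u0.
      have [nP ->] := hs n.
      exact: le_trans IH (L2 _ nP IH).
    have [N hN] := hc r1 r1p.
    have := hN N (leqnn N); rewrite subr0 rr => lt1.
    by move: (lt_le_trans lt1 (big N)); rewrite ltxx.
  move=> hy.
  set q := abs a * abs y.
  have q0 : 0 <= q by rewrite mulr_ge0.
  have hQ : forall x, abs a * abs x < 1 -> x != P /\ abs a * abs (f x) < 1.
    move=> x hx; split.
      by rewrite PE; apply/eqP => e; move: (L1 _ hx); rewrite e (abs0' habs) => /eqP; rewrite eq_sym oner_eq0.
    by rewrite Lsm // expr_lt1 // mulr_ge0.
  have hI' := @iter_inv K P f (fun x => abs a * abs x < 1) y hy hQ.
  exists (fun n => iter n f y); split; first by move=> n; case: (hI' n).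
  have bd : forall n, abs a * abs (iter n f y) <= q ^+ n.+1.
    elim=> [|n IH]; first by rewrite expr1.
    have [_ hs] := hI' n.
    rewrite iterS Lsm // expr2 exprSr.
    apply: ler_pM => //; first by rewrite mulr_ge0.
    by rewrite mulr_ge0.
    apply: le_trans IH _; rewrite -[X in _ <= X]expr1; apply: ler_wiXn2l => //.
    exact: ltW.
  move=> eps e0.
  have [N hN] := geo_small q0 hy (mulr_gt0 e0 a0).
  exists N => n hn; rewrite subr0.
  have h1 : abs a * abs (iter n f y) < eps * abs a.
    apply: le_lt_trans (bd n) _; apply: le_lt_trans hN.
    apply: ler_wiXn2l => //; [exact: ltW | exact: leqW].
  by move: h1; rewrite mulrC ltr_pM2r.

move=> y; split.
  case=> r [[r0 [hP hinv]] hy].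
  rewrite ltNge; apply/negP => hy1.
  have rlt : r1 < r := le_lt_trans hy1 hy.
  set z := - a^-1.
  have hz : abs (z - x2) = r1.
    have -> : z - x2 = - (2 * a - b) / (a * (a - b)) by rewrite /z /x2; field; rewrite abn ha.
    rewrite !aM (absN' habs) (absV' habs) aM h2ab hab1 /r1.
    by field; rewrite gt_eqF.
  have zP : z != P.
    rewrite PE /z.
    have -> : b * - a^-1 + 1 = (a - b) / a by field.
    by rewrite mulf_neq0 // invr_eq0.
  have fz : f z = x2 by rewrite /f /z /x2; field; rewrite abn ha.
  have [y' [h1 h2]] := hinv r1 rlt z hz 1%N (leqnn 1).
  move: h1; rewrite /iterate /= (negbTE zP) fz => -[e]; rewrite -e subrr (abs0' habs) in h2.
  by move: r1p; rewrite -h2 ltxx.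
move=> hy; exists r1; split => //.
have hQ : forall rho x, abs (x - x2) = rho -> rho < r1 ->
    x != P /\ abs (f x - x2) = rho.
  move=> rho x hx hr; rewrite -hx rr in hr.
  have [hb1 hf] := L3 _ hr; split; last by rewrite hf.
  by rewrite PE; apply/eqP => e; move: hb1; rewrite e (abs0' habs) => /eqP; rewrite eq_sym oner_eq0.
split => //; split.
  move=> x hx; apply/eqP.
  exact: (hQ _ x erefl hx).1.
move=> rho hr x hx n _.
have hI := @iter_inv K P f (fun z => abs (z - x2) = rho) x hx (fun z hz => hQ rho z hz hr) n.
by exists (iter n f x).
Qed.
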